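(* In the setting below, the iterates of Algorithm PDC satisfy, for all $k\ge0$, $$\psi(y^{k+1},v^{k+1};\rho^k)\le\psi(y^k,v^k;\rho^k)-\rho^k\beta^k\|(y^{k+1}-y^k,\ v^{k+1}-v^k)\|_2^2,$$ where $\psi(y,v;\rho)=F(y,v)+\rho\,\varphi(y,v)$.
   Context: Setting. $\mathcal A$ is a finite set of links; $\mathcal V=\{\Delta h: h\ge0,\ \Lambda h=d\}\subset\mathbb R^{|\mathcal A|}$, where $\Delta$ is a 0/1 link–route incidence matrix, $\Lambda$ a 0/1 OD–route incidence matrix in which every route belongs to exactly one OD pair and every OD pair has at least one route, and $d>0$ (so $\mathcal V$ is a nonempty compact convex polytope in $\mathbb R^{|\mathcal A|}_{\ge0}$). Let $u_a\ge0$, $\mathcal Y=\{y: 0\le y_a\le u_a\ \forall a\}$, $1\le\tau\le|\mathcal A|$, $\Upsilon_\tau=\{y\in\mathcal Y: |\{a: y_a>0\}|\le\tau\}$. Standing assumptions: each $t_a(y_a,v_a)$ is continuously differentiable and strictly increasing in $v_a$ for $y_a\ge0$; each $G_a$ is nonnegative, continuously differentiable, strictly increasing, convex; $\int_0^{v_a}t_a(y_a,w)dw$ and $t_a(y_a,v_a)v_a$ are convex in $(y_a,v_a)$. With $\eta>0$: $F(y,v)=\sum_a t_a(y_a,v_a)v_a+\eta\sum_aG_a(y_a)$, $f(y,v)=\sum_a\int_0^{v_a}t_a(y_a,w)dw$, $g(y)=\min_{v\in\mathcal V}f(y,v)$, $\varphi(y,v)=f(y,v)-g(y)$. $\mathcal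 V^*(y)$ is the set of $v\in\mathcal V$ with $\langle t(y,v),v'-v\rangle\ge0$ for all $v'\in\mathcal V$; it is a singleton equal to $\arg\min_{v\in\mathcal V}f(y,v)$. Known fact: $g$ is convex and continuously differentiable on $\mathcal Y$. Define $\Phi(y,v;\bar y,\bar v)=f(y,v)-g(\bar y)-\nabla g(\bar y)^{\mathsf T}(y-\bar y)$ and, for given $\rho^k,\beta^k>0$ and $(y^k,v^k)$, $\Psi^k(y,v)=F(y,v)+\rho^k\Phi(y,v;y^k,v^k)+\rho^k\beta^k\|(y-y^k,v-v^k)\|_2^2$. Algorithm AMA with inputs $(\rho^k,\beta^k,y^k,v^k;y^{k,0})$: for $j=0,1,\dots$: $v^{k,j+1}$ = unique minimizer of $\Psi^k(y^{k,j},\cdot)$ over $\mathcal V$; $y^{k,j+1}$ = a minimizer of $\Psi^k(\cdot,v^{k,j+1})$ over $\Upsilon_\tau$; stop if $(y^{k,j+1},v^{k,j+1})$ is partially optimal (i.e. $\Psi^k(y^{k,j+1},v^{k,j+1})\le\Psi^k(y^{k,j+1},v)\ \forall v\in\mathcal V$ and $\le\Psi^k(y,v^{k,j+1})\ \forall y\in\Upsilon_\tau$). $\mathrm{AMA}(\cdot)$ denotes the returned point if it stops, otherwise any accumulation point of its iterates. Algorithm PDC with parameters $\epsilon_1,\epsilon_2,\epsilon_3>0$, $0<\theta_l<\theta_u$, $\rho^0>0$, $\sigma>1$, $y^0\in\Upsilon_\tau$: set $v^0\in\mathcal V^*(y^0)$ and choose $\beta^0\in[\theta_l/\rho^0,\theta_u/\rho^0]$;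 for $k=0,1,\dots$: (i) $(y^{k+1},v^{k+1})=\mathrm{AMA}(\rho^k,\beta^k,y^k,v^k;y^k)$; (ii) if $\|y^{k+1}-y^k\|_2\le\epsilon_1$, $\|v^{k+1}-v^k\|_2\le\epsilon_2$ and $\Phi(y^{k+1},v^{k+1};y^k,v^k)\le\epsilon_3$, stop and return $(y^{k+1},v^{k+1})$; (iii) set $\rho^{k+1}=\sigma\rho^k$ if $\Phi(y^{k+1},v^{k+1};y^k,v^k)>\epsilon_3$, else $\rho^{k+1}=\rho^k$; (iv) choose $\beta^{k+1}\in[\theta_l/\rho^{k+1},\theta_u/\rho^{k+1}]$. *)

(* Defs.v *)
From HB Require Import structures.
From mathcomp Require Import all_boot all_order all_algebra.
From mathcomp Require Import all_classical all_reals all_analysis.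
Set Implicit Arguments. Unset Strict Implicit. Unset Printing Implicit Defensive.
Import Order.TTheory GRing.Theory Num.Theory.
Import numFieldNormedType.Exports.
Local Open Scope classical_set_scope.
Local Open Scope ring_scope.

Section PDCModel.
Variables (R : realType) (n m p : nat).
(* links = 'I_n, routes = 'I_m, OD pairs = 'I_p; vectors in R^|A| are 'I_n -> R *)
Variables (Delta : 'I_n -> 'I_m -> bool) (Lambda : 'I_p -> 'I_m -> bool)
          (d : 'I_p -> R) (u : 'I_n -> R) (tau : nat)
          (t : 'I_n -> R -> R -> R) (G : 'I_n -> R -> R) (eta : R)
          (dg : ('I_n -> R) -> ('I_n -> R)). (* dg = the gradient of g *)

Definition Vset : set ('I_n -> R) :=
  [set v | exists h : 'I_m -> R, (forall r, 0 <= h r) /\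
     (forall w, \sum_(r < m) (Lambda w r)%:R * h r = d w) /\
     (forall a, v a = \sum_(r < m) (Delta a r)%:R * h r)].

Definition Yset : set ('I_n -> R) := [set y | forall a, 0 <= y a <= u a].

Definition Ups : set ('I_n -> R) :=
  [set y | Yset y /\ (#|[set a : 'I_n | (0 < y a)%R]| <= tau)%N].

Definition Fobj (y v : 'I_n -> R) : R :=
  \sum_(a < n) t a (y a) (v a) * v a + eta * \sum_(a < n) G a (y a).

Definition prim (a : 'I_n) (y w : R) : R :=
  \int[lebesgue_measure]_(s in `[0, w]) t a y s.

Definition fobj (y v : 'I_n -> R) : R := \sum_(a < n) prim a (y a) (v a).

(* g(y) = min_{v in V} f(y,v) (written as an infimum; the min is attained) *)
Definition gval (y : 'I_n -> R) : R := inf [set fobj y v | v in Vset].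

Definition phi (y v : 'I_n -> R) : R := fobj y v - gval y.

Definition psi (y v : 'I_n -> R) (rho : R) : R := Fobj y v + rho * phi y v.

Definition sqdist (y v y' v' : 'I_n -> R) : R :=
  \sum_(a < n) (y a - y' a) ^+ 2 + \sum_(a < n) (v a - v' a) ^+ 2.

Definition norm2 (x : 'I_n -> R) : R := Num.sqrt (\sum_(a < n) x a ^+ 2).

Definition Phi (y v yb vb : 'I_n -> R) : R :=
  fobj y v - gval yb - \sum_(a < n) dg yb a * (y a - yb a).

Definition Psi (rho beta : R) (yk vk : 'I_n -> R) (y v : 'I_n -> R) : R :=
  Fobj y v + rho * Phi y v yk vk + rho * beta * sqdist y v yk vk.

Definition Vstar (y : 'I_n -> R) : set ('I_n -> R) :=
  [set v | Vset v /\ forall v', Vset v' ->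
     0 <= \sum_(a < n) t a (y a) (v a) * (v' a - v a)].

Definition partial_opt rho beta yk vk (y v : 'I_n -> R) : Prop :=
  (forall v', Vset v' -> Psi rho beta yk vk y v <= Psi rho beta yk vk y v') /\
  (forall y', Ups y' -> Psi rho beta yk vk y v <= Psi rho beta yk vk y' v).

Definition accum_point (s : nat -> ('I_n -> R) * ('I_n -> R))
    (q : ('I_n -> R) * ('I_n -> R)) : Prop :=
  forall e : R, 0 < e -> forall N : nat, exists j : nat,
    (N <= j)%N /\ sqdist (s j).1 (s j).2 q.1 q.2 < e.

(* out is a possible value of AMA(rho, beta, yk, vk; y0) *)
Definition AMA_out rho beta (yk vk y0 : 'I_n -> R)
    (out : ('I_n -> R) * ('I_n -> R)) : Prop :=
  exists ys vs : nat -> ('I_n -> R),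
    ys 0%N = y0 /\
    (forall j, Vset (vs j.+1) /\ forall v', Vset v' ->
        Psi rho beta yk vk (ys j) (vs j.+1) <= Psi rho beta yk vk (ys j) v') /\
    (forall j, Ups (ys j.+1) /\ forall y', Ups y' ->
        Psi rho beta yk vk (ys j.+1) (vs j.+1) <= Psi rho beta yk vk y' (vs j.+1)) /\
    ((exists J, partial_opt rho beta yk vk (ys J.+1) (vs J.+1) /\
        (forall j, (j < J)%N -> ~ partial_opt rho beta yk vk (ys j.+1) (vs j.+1)) /\
        out = (ys J.+1, vs J.+1)) \/
     ((forall j, ~ partial_opt rho beta yk vk (ys j.+1) (vs j.+1)) /\
        accum_point (fun j => (ys j.+1, vs j.+1)) out)).

(* step k of PDC is executed iff the algorithm has not stopped before k *)
Definition executed (K : option nat) (k : nat) : Prop :=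
  match K with Some K0 => (k <= K0)%N | None => True end.

(* (y, v, rho, beta) are the iterates of PDC; K = Some K0 if the algorithm
   stops (returns) at iteration K0, K = None if it never stops. *)
Definition PDC_run (eps1 eps2 eps3 theta_l theta_u rho0 sigma : R)
    (y0 : 'I_n -> R) (y v : nat -> ('I_n -> R)) (rho beta : nat -> R)
    (K : option nat) : Prop :=
  [/\ y 0%N = y0, Vstar (y 0%N) (v 0%N), rho 0%N = rho0,
      theta_l / rho 0%N <= beta 0%N <= theta_u / rho 0%N &
      forall k, executed K k ->
        [/\ AMA_out (rho k) (beta k) (y k) (v k) (y k) (y k.+1, v k.+1),
            (norm2 (fun a => y k.+1 a - y k a) <= eps1 /\
             norm2 (fun a => v k.+1 a - v k a) <= eps2 /\
             Phi (y k.+1) (v k.+1) (y k) (v k) <= eps3) <-> K = Some k &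
            K <> Some k ->
              rho k.+1 = (if eps3 < Phi (y k.+1) (v k.+1) (y k) (v k)
                          then sigma * rho k else rho k) /\
              theta_l / rho k.+1 <= beta k.+1 <= theta_u / rho k.+1]].

End PDCModel.

(* Main.v *)
Require Import Defs.
Set Implicit Arguments. Unset Strict Implicit. Unset Printing Implicit Defensive.
From HB Require Import structures.
From mathcomp Require Import all_boot all_order all_algebra.
From mathcomp Require Import all_classical all_reals all_analysis.
From mathcomp Require Import lra ring.
Import Order.TTheory GRing.Theory Num.Theory.
Import numFieldNormedType.Exports.
Local Open Scope classical_set_scope.
Local Open Scope ring_scope.
Section Int.
Variable R : realType.
Notation mu := (@lebesgue_measure R).
Implicit Types f : R -> R.

Lemma int_cc f a b : continuous f -> mu.-integrable `[a, b] (EFin \o f).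
Proof.
move=> cf; apply: continuous_compact_integrable; first exact: segment_compact.
by move=> x; apply: continuous_subspaceT.
Qed.

Lemma int_split f w1 w2 : continuous f -> 0 <= w1 -> w1 <= w2 ->
  \int[mu]_(s in `[0, w2]) f s = \int[mu]_(s in `[0, w1]) f s + \int[mu]_(s in `]w1, w2]) f s.
Proof.
move=> cf w10 w12.
have E : [set` `[0, w2]] = [set` `[0, w1]] `|` [set` `]w1, w2]] :> set R.
  by apply: (@itv_bndbnd_setU _ _ (BLeft 0) (BRight w1) (BRight w2)); rewrite bnd_simp.
rewrite E; apply: Rintegral_setU => //.
- by rewrite -E; exact: int_cc.
- apply/eqP/seteqP; split=> x //= [].
  rewrite !in_itv /= => /andP[_ h1] /andP[h2 _].
  by move: (lt_le_trans h2 h1); rewrite ltxx.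
Qed.

Lemma int_intS f (D : set R) a b : continuous f -> D `<=` `[a, b] -> measurable D ->
  mu.-integrable D (EFin \o f).
Proof.
move=> cf Dab mD; apply: (@integrableS _ _ _ mu [set` `[a, b]] D) => //; exact: int_cc.
Qed.

Lemma int_lb f (D : set R) a b c : continuous f -> D `<=` `[a, b] -> measurable D ->
  mu D = (b - a)%:E -> (forall x, D x -> c <= f x) ->
  (b - a) * c <= \int[mu]_(s in D) f s.
Proof.
move=> cf Dab mD muD fc.
have -> : (b - a) * c = \int[mu]_(s in D) (fun=> c) s.
  rewrite Rintegral_cst //. set z := fine _. have -> : z = fine ((b - a)%:E) by rewrite /z; congr fine; exact: muD. by rewrite mulrC.
apply: le_Rintegral => //.
- by apply: int_intS Dab mD; exact: cst_continuous.
- exact: int_intS Dab mD.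
Qed.

Lemma int_ub f (D : set R) a b c : continuous f -> D `<=` `[a, b] -> measurable D ->
  mu D = (b - a)%:E -> (forall x, D x -> f x <= c) ->
  \int[mu]_(s in D) f s <= (b - a) * c.
Proof.
move=> cf Dab mD muD fc.
have -> : (b - a) * c = \int[mu]_(s in D) (fun=> c) s.
  rewrite Rintegral_cst //. set z := fine _. have -> : z = fine ((b - a)%:E) by rewrite /z; congr fine; exact: muD. by rewrite mulrC.
apply: le_Rintegral => //.
- exact: int_intS Dab mD.
- by apply: int_intS Dab mD; exact: cst_continuous.
Qed.

Lemma mu_oc a b : a <= b -> mu [set` `]a, b]] = (b - a)%:E.
Proof. move=> ab; rewrite lebesgue_measure_itv /= lte_fin; case: (ltP a b) => [//|ba]. have -> : b = a by apply/le_anti; rewrite ba ab. by rewrite subrr. Qed.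

Lemma mu_cc a b : a <= b -> mu [set` `[a, b]] = (b - a)%:E.
Proof. move=> ab; rewrite lebesgue_measure_itv /= lte_fin; case: (ltP a b) => [//|ba]. have -> : b = a by apply/le_anti; rewrite ba ab. by rewrite subrr. Qed.

End Int.
Section Riem.
Variable R : realType.
Notation mu := (@lebesgue_measure R).
Variable f : R -> R.
Hypothesis cf : continuous f.
Hypothesis mf : forall x y, x <= y -> f x <= f y.

Lemma int0 : \int[mu]_(s in `[0, 0]) f s = 0.
Proof.
apply/le_anti/andP; split.
- have := @int_ub R f [set` `[0, 0]] 0 0 (f 0) cf (fun x h => h) (measurable_itv _) (mu_cc (lexx 0)).
  rewrite subrr mul0r; apply => x /=; rewrite in_itv /= => /andP[h1 h2].
  by apply: mf.
- have := @int_lb R f [set` `[0, 0]] 0 0 (f 0) cf (fun x h => h) (measurable_itv _) (mu_cc (lexx 0)).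
  rewrite subrr mul0r; apply => x /=; rewrite in_itv /= => /andP[h1 h2].
  by apply: mf.
Qed.

Lemma piece_lb a h : 0 <= h -> h * f a <= \int[mu]_(s in `]a, a + h]) f s.
Proof.
move=> h0.
have ah : a <= a + h by rewrite lerDl.
have := @int_lb R f [set` `]a, a + h]] a (a + h) (f a) cf _ (measurable_itv _) (mu_oc ah).
rewrite addrAC subrr add0r; apply.
- by move=> x /=; rewrite !in_itv /= => /andP[h1 h2]; rewrite h2 ltW.
- by move=> x /=; rewrite in_itv /= => /andP[h1 h2]; apply: mf; rewrite ltW.
Qed.

Lemma piece_ub a h : 0 <= h -> \int[mu]_(s in `]a, a + h]) f s <= h * f (a + h).
Proof.
move=> h0.
have ah : a <= a + h by rewrite lerDl.
have := @int_ub R f [set` `]a, a + h]] a (a + h) (f (a + h)) cf _ (measurable_itv _) (mu_oc ah).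
rewrite addrAC subrr add0r; apply.
- by move=> x /=; rewrite !in_itv /= => /andP[h1 h2]; rewrite h2 ltW.
- by move=> x /=; rewrite in_itv /= => /andP[h1 h2]; apply: mf.
Qed.

Lemma riem_lb h k : 0 <= h ->
  \sum_(i < k) h * f (i%:R * h) <= \int[mu]_(s in `[0, k%:R * h]) f s.
Proof.
move=> h0; elim: k => [|k IH]; first by rewrite big_ord0 mul0r int0.
rewrite big_ord_recr /=.
have e : k.+1%:R * h = k%:R * h + h by rewrite -nat1r mulrDl mul1r addrC.
rewrite e (int_split (w1 := k%:R * h) cf) ?mulr_ge0 ?lerDl //.
by apply: lerD => //; apply: piece_lb.
Qed.

Lemma riem_ub h k : 0 <= h ->
  \int[mu]_(s in `[0, k%:R * h]) f s <= \sum_(i < k) h * f (i.+1%:R * h).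
Proof.
move=> h0; elim: k => [|k IH]; first by rewrite big_ord0 mul0r int0.
rewrite big_ord_recr /=.
have e : k.+1%:R * h = k%:R * h + h by rewrite -nat1r mulrDl mul1r addrC.
rewrite e (int_split (w1 := k%:R * h) cf) ?mulr_ge0 ?lerDl //.
by apply: lerD => //; apply: piece_ub.
Qed.

Lemma int_ge w : 0 <= w -> w * f 0 <= \int[mu]_(s in `[0, w]) f s.
Proof.
move=> w0; have := piece_lb 0 w0; rewrite add0r.
by rewrite (int_split cf (lexx 0) w0) int0 add0r.
Qed.

Lemma int_usc w w' : 0 <= w -> 0 <= w' -> w' <= w + 1 ->
  \int[mu]_(s in `[0, w']) f s <= \int[mu]_(s in `[0, w]) f s + `|w' - w| * (`|f 0| + `|f (w + 1)|).
Proof.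
move=> w0 w'0 w'1.
case: (leP w w') => ww.
  rewrite (int_split cf w0 ww).
  apply: lerD => //.
  have e : w' = w + (w' - w) by rewrite addrC subrK.
  have hp : 0 <= w' - w by rewrite subr_ge0.
  rewrite {1}e; apply: le_trans (piece_ub w hp) _.
  rewrite -e (ger0_norm hp); apply: ler_wpM2l => //.
  apply: le_trans (mf w'1) _; apply: le_trans (ler_norm _) _; by rewrite lerDr.
rewrite (int_split cf w'0 (ltW ww)).
have e : w = w' + (w - w') by rewrite addrC subrK.
have hp : 0 <= w - w' by rewrite subr_ge0 ltW.
have := piece_lb w' hp; rewrite -e => H.
rewrite distrC (ger0_norm hp).
have H2 : - ((w - w') * f 0) <= (w - w') * (`|f 0| + `|f (w + 1)|).
  rewrite -mulrN; apply: ler_wpM2l => //; apply: le_trans (_ : _ <= `|f 0|) _.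
    by rewrite -normrN ler_norm.
  by rewrite lerDl.
have H3 : (w - w') * f 0 <= (w - w') * f w' by apply: ler_wpM2l => //; apply: mf.
move: H H2 H3.
set I1 := \int[mu]_(s in `[0, w']) f s.
set I2 := \int[mu]_(s in _) f s.
set A := (w - w') * _. set B := (w - w') * f w'. set D := (w - w') * f 0.
move=> *; lra.
Qed.
End Riem.
Section LSCsec.
Variable R : realType.

Lemma cont2_eps (h : R * R -> R) (q : R * R) :
  {for q, continuous h} -> forall e, 0 < e -> exists2 d, 0 < d &
    forall x1 x2, `|x1 - q.1| < d -> `|x2 - q.2| < d -> `|h q - h (x1, x2)| < e.
Proof.
move=> ch e e0.
have /cvgrPdist_lt /(_ e e0) := ch.
move=> /nbhs_ballP [d /= d0 H]; exists d => // x1 x2 h1 h2.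
apply: (H (x1, x2)); split => /=; rewrite -ball_normE /ball_ /= distrC //.
Qed.

Lemma cont1_eps (h : R -> R) (q : R) :
  {for q, continuous h} -> forall e, 0 < e -> exists2 d, 0 < d &
    forall x, `|x - q| < d -> `|h q - h x| < e.
Proof.
move=> ch e e0.
have /cvgrPdist_lt /(_ e e0) := ch.
move=> /nbhs_ballP [d /= d0 H]; exists d => // x h1.
apply: (H x); rewrite -ball_normE /ball_ /= distrC //.
Qed.

End LSCsec.
Section LSCfw.
Variables (R : realType) (n : nat).
Notation Z := (('I_n -> R) * ('I_n -> R))%type.

Definition closeZ (d : R) (z' z : Z) :=
  forall a, `|z'.1 a - z.1 a| < d /\ `|z'.2 a - z.2 a| < d.
Definition nnZ (z : Z) := forall a, 0 <= z.1 a /\ 0 <= z.2 a.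
Definition LSC (f : Z -> R) (z : Z) := forall e, 0 < e -> exists2 d, 0 < d &
  forall z', nnZ z' -> closeZ d z' z -> f z - e < f z'.
Definition CONT (f : Z -> R) z := LSC f z /\ LSC (fun x => - f x) z.

Lemma closeZ_le d d' z' z : d <= d' -> closeZ d z' z -> closeZ d' z' z.
Proof.
move=> dd H a; have [h1 h2] := H a; split; exact: lt_le_trans dd.
Qed.

Lemma LSC_ext f g z : (forall x, f x = g x) -> LSC f z -> LSC g z.
Proof.
move=> fg H e e0; have [d d0 Hd] := H e e0; exists d => // z' nz cz.
by rewrite -!fg; apply: Hd.
Qed.

Lemma LSC_const c z : LSC (fun=> c) z.
Proof. by move=> e e0; exists 1 => // z' _ _; rewrite ltrBlDr ltrDl. Qed.

Lemma LSC_add f g z : LSC f z -> LSC g z -> LSC (fun x => f x + g x) z.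
Proof.
move=> Hf Hg e e0.
have e20 : 0 < e / 2 by rewrite divr_gt0.
have [d1 d10 H1] := Hf _ e20; have [d2 d20 H2] := Hg _ e20.
exists (Num.min d1 d2); first by rewrite lt_min d10 d20.
move=> z' nz cz.
have c1 : closeZ d1 z' z by apply: closeZ_le cz; rewrite ge_min lexx.
have c2 : closeZ d2 z' z by apply: closeZ_le cz; rewrite ge_min lexx orbT.
have := H1 _ nz c1; have := H2 _ nz c2.
have -> : e = e / 2 + e / 2 by rewrite -splitr.
move=> *; lra.
Qed.

Lemma LSC_sum_seq (I : Type) (s : seq I) (F : I -> Z -> R) z :
  (forall i, LSC (F i) z) -> LSC (fun x => \sum_(i <- s) F i x) z.
Proof.
move=> H; elim: s => [|i s IH].
  by apply: (LSC_ext (f := fun=> 0)) => [x|]; rewrite ?big_nil //; exact: LSC_const.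
apply: (LSC_ext (f := fun x => F i x + \sum_(j <- s) F j x)) => [x|].
  by rewrite big_cons.
exact: LSC_add.
Qed.

Lemma LSC_sum (F : 'I_n -> Z -> R) z :
  (forall i, LSC (F i) z) -> LSC (fun x => \sum_(i < n) F i x) z.
Proof. exact: LSC_sum_seq. Qed.

Lemma LSC_scale c f z : 0 <= c -> LSC f z -> LSC (fun x => c * f x) z.
Proof.
move=> c0 H; case: (ltP 0 c) => cp; last first.
  have -> : c = 0 by apply/le_anti; rewrite cp c0.
  by apply: (LSC_ext (f := fun=> 0)) => [x|]; rewrite ?mul0r //; exact: LSC_const.
move=> e e0; have [d d0 Hd] := H (e / c) (divr_gt0 e0 cp).
exists d => // z' nz cz; have := Hd _ nz cz.
rewrite ltrBlDr => h.
have : c * f z < c * (f z' + e / c) by rewrite ltr_pM2l.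
by rewrite mulrDr mulrCA divff ?mulr1 ?gt_eqF // -ltrBlDr.
Qed.

Lemma CONT_LSC f z : CONT f z -> LSC f z. Proof. by case. Qed.

Lemma CONT_ext f g z : (forall x, f x = g x) -> CONT f z -> CONT g z.
Proof.
move=> fg [H1 H2]; split; first exact: LSC_ext H1.
by apply: LSC_ext H2 => x; rewrite fg.
Qed.

Lemma CONT_const c z : CONT (fun=> c) z.
Proof. by split; exact: LSC_const. Qed.

Lemma CONT_add f g z : CONT f z -> CONT g z -> CONT (fun x => f x + g x) z.
Proof.
move=> [f1 f2] [g1 g2]; split; first exact: LSC_add.
by apply: (LSC_ext (f := fun x => - f x + - g x)) => [x|]; [rewrite opprD | exact: LSC_add].
Qed.

Lemma CONT_sum (F : 'I_n -> Z -> R) z :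
  (forall i, CONT (F i) z) -> CONT (fun x => \sum_(i < n) F i x) z.
Proof.
move=> H; split; first by apply: LSC_sum => i; case: (H i).
apply: (LSC_ext (f := fun x => \sum_(i < n) - F i x)) => [x|].
  by rewrite sumrN.
by apply: LSC_sum => i; case: (H i).
Qed.

Lemma CONT_scale c f z : CONT f z -> CONT (fun x => c * f x) z.
Proof.
move=> [H1 H2]; case: (leP 0 c) => c0.
  split; first exact: LSC_scale.
  by apply: (LSC_ext (f := fun x => c * - f x)) => [x|]; [rewrite mulrN | exact: LSC_scale].
have c0' : 0 <= - c by rewrite oppr_ge0 ltW.
split.
  by apply: (LSC_ext (f := fun x => - c * - f x)) => [x|]; [rewrite mulrNN | exact: LSC_scale].
by apply: (LSC_ext (f := fun x => - c * f x)) => [x|]; [rewrite mulNr | exact: LSC_scale].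
Qed.

Lemma CONT_coord (h : R * R -> R) z a :
  {for (z.1 a, z.2 a), continuous h} -> CONT (fun x => h (x.1 a, x.2 a)) z.
Proof.
move=> ch; split=> e e0; have [d d0 Hd] := cont2_eps ch e0; exists d => // z' _ cz;
  have [c1 c2] := cz a; have := Hd _ _ c1 c2; rewrite /= ltr_norml => /andP[u v]; lra.
Qed.

End LSCfw.
Section Cth.
Variable R : realType.
Lemma cont_h (T : R * R -> R) (q : R * R) c d :
  {for (q.1, c * q.2), continuous T} ->
  {for q, continuous (fun x : R * R => x.2 * d * T (x.1, c * x.2))}.
Proof.
move=> cT.
have cc : {for q, continuous (fun x : R * R => T (x.1, c * x.2))}.
  apply: (@continuous_comp _ _ _ (fun x : R * R => (x.1, c * x.2)) T) => //.
  apply: (@cvg_pair _ _ _ _ (nbhs q.1) (nbhs (c * q.2))); first exact: cvg_fst.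
  by apply: cvgMl_tmp; exact: cvg_snd.
apply: cvgM => //.
by apply: cvgMr_tmp; exact: cvg_snd.
Qed.

Lemma cont_tv (T : R * R -> R) (q : R * R) :
  {for q, continuous T} ->
  {for q, continuous (fun x : R * R => T x * x.2)}.
Proof.
move=> cT; apply: cvgM => //; exact: cvg_snd.
Qed.
End Cth.
Section PrimLSC.
Variable R : realType.
Notation mu := (@lebesgue_measure R).
Variable Tt : R -> R -> R.
Hypothesis ct : forall y s, 0 <= y -> {for (y, s), continuous (fun q : R * R => Tt q.1 q.2)}.
Hypothesis mt : forall y w1 w2, 0 <= y -> w1 <= w2 -> Tt y w1 <= Tt y w2.
Let P y w := \int[mu]_(s in `[0, w]) Tt y s.

Lemma slice_cont y : 0 <= y -> continuous (Tt y).
Proof.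
move=> y0 s.
apply: (@continuous_comp _ _ _ (fun s : R => (y, s)) (fun q : R * R => Tt q.1 q.2)); last exact: ct.
apply: (@cvg_pair _ _ _ _ (nbhs y) (nbhs s)); [exact: cvg_cst | exact: cvg_id].
Qed.

Lemma tele_sum (g : nat -> R) N : \sum_(i < N) (g i.+1 - g i) = g N - g 0%N.
Proof. by rewrite -(big_mkord xpredT (fun i => g i.+1 - g i)) telescope_sumr. Qed.

Lemma prim_lsc y0 w0 : 0 <= y0 -> 0 <= w0 -> forall e, 0 < e -> exists2 d, 0 < d &
  forall y w, 0 <= y -> 0 <= w -> `|y - y0| < d -> `|w - w0| < d -> P y0 w0 - e < P y w.
Proof.
move=> y00 w00 e e0.
have e20 : 0 < e / 2 by rewrite divr_gt0.
set C := Tt y0 w0 - Tt y0 0.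
have C0 : 0 <= C by rewrite subr_ge0; apply: mt.
set N := (Num.truncn (w0 * C / (e / 2))).+1.
have Nr0 : 0 < N%:R :> R by rewrite ltr0n.
have NN : w0 * C / (e / 2) < N%:R by exact: truncnS_gt.
set h0 := w0 / N%:R.
have h00 : 0 <= h0 by rewrite divr_ge0 // ltW.
have w0e : w0 = N%:R * h0 by rewrite /h0 mulrC -mulrA mulVf ?mulr1 // gt_eqF.
have UB : P y0 w0 <= \sum_(i < N) h0 * Tt y0 (i.+1%:R * h0).
  by rewrite /P {1}w0e; apply: riem_ub => //; [exact: slice_cont | move=> *; exact: mt].
set L := fun q : R * R => \sum_(i < N) q.2 * N%:R^-1 * Tt q.1 (i%:R / N%:R * q.2).
have L0 : L (y0, w0) = \sum_(i < N) h0 * Tt y0 (i%:R * h0).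
  by rewrite /L; apply: eq_bigr => i _ /=; rewrite /h0; congr (_ * Tt _ _); ring.
have gap : \sum_(i < N) h0 * Tt y0 (i.+1%:R * h0) - \sum_(i < N) h0 * Tt y0 (i%:R * h0) < e / 2.
  have := tele_sum (fun j : nat => h0 * Tt y0 (j%:R * h0)) N; rewrite /= => TS.
  rewrite -sumrB TS mul0r -w0e -mulrBr -/C.
  rewrite /h0 mulrAC ltr_pdivrMr //.
  by rewrite -ltr_pdivrMl // mulrC.
have cL : L q @[q --> (y0, w0)] --> L (y0, w0).
  rewrite /L.
  have := @cvg_big R 'I_N +%R 0 xpredT (@add_continuous _) _ (nbhs (y0, w0)) (index_enum 'I_N) (fun i q => q.2 / N%:R * Tt q.1 (i%:R / N%:R * q.2)) (fun i => w0 / N%:R * Tt y0 (i%:R / N%:R * w0)).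
  apply => // i _.
  have H := (cont_h (T := fun q : R * R => Tt q.1 q.2) (q := (y0, w0)) (c := i%:R / N%:R) (d := N%:R^-1) (@ct y0 (i%:R / N%:R * w0) y00)).
  exact H.
have [d d0 Hd] := cont2_eps cL e20.
exists d => // y w y0' w0' dy dw.
have := Hd y w dy dw; rewrite ltr_norml => /andP[_ h2].
have LB : L (y, w) <= P y w.
  have wN : w = N%:R * (w / N%:R) by rewrite mulrC -mulrA mulVf ?mulr1 // gt_eqF.
  rewrite /P {2}wN.
  apply: le_trans (riem_lb _ _ _ _) => //; last first.
  - by rewrite divr_ge0 // ltW.
  - by move=> *; exact: mt.
  - exact: slice_cont.
  by rewrite /L le_eqVlt; apply/orP; left; apply/eqP; apply: eq_bigr => i _ /=; congr (_ * Tt _ _); ring.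
move: UB gap LB h2; rewrite L0 /=.
set A := \sum_(i < N) _. set B := \sum_(i < N) _. move=> *; lra.
Qed.
End PrimLSC.
Section Cmisc.
Variables (R : realType) (n : nat).
Notation Z := (('I_n -> R) * ('I_n -> R))%type.

Lemma CONT_fst (f : R -> R) (z : Z) a : {for z.1 a, continuous f} -> CONT (fun x : Z => f (x.1 a)) z.
Proof.
move=> cf; split=> e e0; have [dd d0 Hd] := cont1_eps cf e0; exists dd => // z' _ cz;
  have [c1 _] := cz a; have := Hd _ c1; rewrite /= ltr_norml => /andP[u v]; lra.
Qed.

Lemma CONT_snd (f : R -> R) (z : Z) a : {for z.2 a, continuous f} -> CONT (fun x : Z => f (x.2 a)) z.
Proof.
move=> cf; split=> e e0; have [dd d0 Hd] := cont1_eps cf e0; exists dd => // z' _ cz;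
  have [_ c1] := cz a; have := Hd _ c1; rewrite /= ltr_norml => /andP[u v]; lra.
Qed.

Lemma cont_lin (c b : R) : continuous (fun x : R => - (c * (x - b))).
Proof.
move=> x; apply: cvgN; apply: cvgMl_tmp; apply: cvgB; [exact: cvg_id | exact: cvg_cst].
Qed.

Lemma cont_sq (b : R) : continuous (fun x : R => (x - b) ^+ 2).
Proof.
move=> x; rewrite /continuous_at.
have -> : (fun x => (x - b) ^+ 2) = (fun x => (x - b) * (x - b)) by apply: funext => y; rewrite expr2.
rewrite expr2; apply: cvgM; apply: cvgB; (exact: cvg_id || exact: cvg_cst).
Qed.
End Cmisc.
Section Gsec.
Variables (R : realType) (n m p : nat).
Variables (Delta : 'I_n -> 'I_m -> bool) (Lambda : 'I_p -> 'I_m -> bool)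
          (d : 'I_p -> R) (t : 'I_n -> R -> R -> R).
Notation mu := (@lebesgue_measure R).
Hypothesis Huniq : forall r : 'I_m, exists! w : 'I_p, Lambda w r.
Hypothesis Hd : forall w, 0 < d w.
Hypothesis Htdiff : forall a (q : R * R), 0 <= q.1 ->
     differentiable (fun z : R * R => t a z.1 z.2) q.
Hypothesis Htmono : forall a y1 w1 w2, 0 <= y1 -> w1 < w2 -> t a y1 w1 < t a y1 w2.
Hypothesis Hpconv : forall a y1 w1 y2 w2 lam, 0 <= y1 -> 0 <= w1 -> 0 <= y2 -> 0 <= w2 ->
     0 <= lam <= 1 ->
     prim t a (lam * y1 + (1 - lam) * y2) (lam * w1 + (1 - lam) * w2)
       <= lam * prim t a y1 w1 + (1 - lam) * prim t a y2 w2.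
Hypothesis Vne : exists v, Vset Delta Lambda d v.

Notation Vs := (Vset Delta Lambda d).
Notation gv := (gval Delta Lambda d t).

Lemma t_cont a y s : 0 <= y -> {for (y, s), continuous (fun q : R * R => t a q.1 q.2)}.
Proof. by move=> y0; apply: differentiable_continuous; apply: Htdiff. Qed.

Lemma t_le a y w1 w2 : 0 <= y -> w1 <= w2 -> t a y w1 <= t a y w2.
Proof.
move=> y0; rewrite le_eqVlt => /orP[/eqP -> //|h]; exact/ltW/Htmono.
Qed.

Lemma t_slice a y : 0 <= y -> continuous (t a y).
Proof. move=> y0; apply: (@slice_cont R (t a)) => //; move=> y1 s h; exact: t_cont. Qed.

Lemma Vset_nn v : Vs v -> forall a, 0 <= v a.
Proof.
move=> [h [h0 [_ hv]]] a; rewrite hv; apply: sumr_ge0 => r _.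
by apply: mulr_ge0 => //; rewrite ler0n.
Qed.

Definition Bd := \sum_(w < p) d w.

Lemma Vset_ub v : Vs v -> forall a, v a <= Bd.
Proof.
move=> [h [h0 [hd hv]]] a; rewrite hv.
have -> : Bd = \sum_(r < m) h r.
  rewrite /Bd (eq_bigr (fun w => \sum_(r < m) (Lambda w r)%:R * h r)); last by move=> w _; rewrite hd.
  rewrite exchange_big /=; apply: eq_bigr => r _.
  have [w0 [Hw0 Hu]] := Huniq r.
  rewrite (bigD1 w0) //= Hw0 mul1r big1 ?addr0 // => w ww.
  case Lw: (Lambda w r); last by rewrite mul0r.
  by move: ww; rewrite (Hu w Lw) eqxx.
apply: ler_sum => r _; rewrite -[X in _ <= X]mul1r; apply: ler_wpM2r => //.
by case: (Delta a r).
Qed.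

Lemma Vset_conv v1 v2 lam : Vs v1 -> Vs v2 -> 0 <= lam <= 1 ->
  Vs (fun a => lam * v1 a + (1 - lam) * v2 a).
Proof.
move=> [h1 [h10 [hd1 hv1]]] [h2 [h20 [hd2 hv2]]] /andP[l0 l1].
exists (fun r => lam * h1 r + (1 - lam) * h2 r); split; [|split].
- by move=> r; apply: addr_ge0; apply: mulr_ge0 => //; rewrite subr_ge0.
- move=> w; have -> : d w = lam * d w + (1 - lam) * d w by ring.
  rewrite -{1}(hd1 w) -(hd2 w) !mulr_sumr -big_split /=; apply: eq_bigr => r _; ring.
- move=> a; rewrite hv1 hv2 !mulr_sumr -big_split /=; apply: eq_bigr => r _; ring.
Qed.

Definition Tb (y : 'I_n -> R) := \sum_(a < n) `|t a (y a) 0|.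

Lemma fobj_lb y v : (forall a, 0 <= y a) -> Vs v -> - (Bd * Tb y) <= fobj t y v.
Proof.
move=> y0 Vv; rewrite /Tb mulr_sumr -sumrN; apply: ler_sum => a _.
rewrite /prim.
have IG := int_ge (@t_slice a (y a) (y0 a)) (fun x z h => @t_le a (y a) x z (y0 a) h) (Vset_nn Vv a). apply: le_trans _ IG.
rewrite -mulrN; apply: le_trans (_ : Bd * (- `|t a (y a) 0|) <= v a * - `|t a (y a) 0|) _.
  by apply: ler_wnM2r; [rewrite oppr_le0 | exact: Vset_ub].
apply: ler_wpM2l; first exact: Vset_nn.
by rewrite lerNl -normrN ler_norm.
Qed.

Lemma hinf y : (forall a, 0 <= y a) -> has_inf [set fobj t y v | v in Vs].
Proof.
move=> y0; split.
  by have [v Vv] := Vne; exists (fobj t y v); exists v.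
exists (- (Bd * Tb y)) => _ [v Vv <-]; exact: fobj_lb.
Qed.

Lemma g_le y v : (forall a, 0 <= y a) -> Vs v -> gv y <= fobj t y v.
Proof. by move=> y0 Vv; apply: (ge_inf (proj2 (hinf y0))); exists v. Qed.

Lemma g_approx y e : (forall a, 0 <= y a) -> 0 < e -> exists2 v, Vs v & fobj t y v < gv y + e.
Proof.
move=> y0 e0; have [_ [v Vv <-] h] := inf_adherent e0 (hinf y0).
by exists v.
Qed.


Lemma g_conv y1 y2 lam : (forall a, 0 <= y1 a) -> (forall a, 0 <= y2 a) -> 0 <= lam <= 1 ->
  gv (fun a => lam * y1 a + (1 - lam) * y2 a) <= lam * gv y1 + (1 - lam) * gv y2.
Proof.
move=> h1 h2 hl; have /andP[l0 l1] := hl.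
have l0' : 0 <= 1 - lam by rewrite subr_ge0.
have hm : forall a, 0 <= lam * y1 a + (1 - lam) * y2 a.
  by move=> a; apply: addr_ge0; apply: mulr_ge0.
apply/ler_addgt0Pr => e e0.
have [v1 V1 f1] := g_approx h1 e0.
have [v2 V2 f2] := g_approx h2 e0.
have Vm := Vset_conv V1 V2 hl.
apply: le_trans (g_le hm Vm) _.
have : fobj t (fun a => lam * y1 a + (1 - lam) * y2 a) (fun a => lam * v1 a + (1 - lam) * v2 a)
   <= lam * fobj t y1 v1 + (1 - lam) * fobj t y2 v2.
  rewrite /fobj !mulr_sumr -big_split /=; apply: ler_sum => a _.
  apply: Hpconv => //; exact: Vset_nn.
have : lam * fobj t y1 v1 <= lam * (gv y1 + e) by apply: ler_wpM2l => //; exact: ltW.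
have : (1 - lam) * fobj t y2 v2 <= (1 - lam) * (gv y2 + e) by apply: ler_wpM2l => //; exact: ltW.
move=> *; lra.
Qed.

Lemma g_grad (dgy : 'I_n -> R) y yk : (forall a, 0 <= y a) -> (forall a, 0 <= yk a) ->
  (fun s : R => (gv (fun a => yk a + s * (y a - yk a)) - gv yk) / s)
       @ 0^'+ --> \sum_(a < n) dgy a * (y a - yk a) ->
  \sum_(a < n) dgy a * (y a - yk a) <= gv y - gv yk.
Proof.
move=> hy hk cv; rewrite leNgt; apply/negP => H.
move/cvgr_gt : cv => /(_ _ H) H1.
suff : \forall s \near (0:R)^'+, False by move/filter_const.
near=> s.
have s0 : 0 < s by near: s; exact: nbhs_right_gt.
have s1 : s < 1 by near: s; exact: nbhs_right_lt.
have Hs : gv y - gv yk < (gv (fun a => yk a + s * (y a - yk a)) - gv yk) / s.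
  by near: s; exact: H1.
have Hc := @g_conv y yk s hy hk _.
have : gv (fun a => yk a + s * (y a - yk a)) <= s * gv y + (1 - s) * gv yk.
  have -> : (fun a => yk a + s * (y a - yk a)) = (fun a => s * y a + (1 - s) * yk a).
    by apply: funext => a; ring.
  by apply: Hc; rewrite ltW //= ltW.
move: Hs; rewrite ltr_pdivlMr // => Hs Hc2.
lra.
Unshelve. all: by end_near.
Qed.

Notation Z := (('I_n -> R) * ('I_n -> R))%type.

Lemma prim_LSC a (z0 : Z) : 0 <= z0.1 a -> 0 <= z0.2 a ->
  LSC (fun z : Z => prim t a (z.1 a) (z.2 a)) z0.
Proof.
move=> h1 h2 e e0.
have [dd d0 Hdd] := @prim_lsc R (t a) (fun y s hy => @t_cont a y s hy)
   (fun y w1 w2 hy hw => @t_le a y w1 w2 hy hw) _ _ h1 h2 e e0.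
exists dd => // z' nz cz; have [n1 n2] := nz a; have [c1 c2] := cz a.
exact: Hdd.
Qed.

Lemma prim_USC a (y : 'I_n -> R) (z0 : Z) : 0 <= y a -> 0 <= z0.2 a ->
  LSC (fun z : Z => - prim t a (y a) (z.2 a)) z0.
Proof.
move=> h1 h2 e e0.
set K := `|t a (y a) 0| + `|t a (y a) (z0.2 a + 1)|.
have K0 : 0 <= K by rewrite addr_ge0.
have K1 : 0 < K + 1 by rewrite ltr_wpDl.
exists (Num.min 1 (e / (K + 1))); first by rewrite lt_min ltr01 divr_gt0.
move=> z' nz cz; have [n1 n2] := nz a; have [c1 c2] := cz a.
move: c2; rewrite lt_min => /andP[c21 c22].
have w1 : z'.2 a <= z0.2 a + 1.
  by move: c21; rewrite ltr_norml => /andP[_ h]; rewrite -lerBlDl ltW.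
have := @int_usc R (t a (y a)) (@t_slice a (y a) h1) (fun x z h => @t_le a (y a) x z h1 h) _ _ h2 n2 w1.
rewrite -/K /prim => H.
have : `|z'.2 a - z0.2 a| * K < e.
  apply: le_lt_trans (_ : _ <= `|z'.2 a - z0.2 a| * (K + 1)) _.
    by apply: ler_wpM2l => //; rewrite lerDl.
  by rewrite -ltr_pdivlMr.
move=> *; lra.
Qed.

Lemma sq_close (y v y' v' : 'I_n -> R) dd : 0 < dd -> sqdist y v y' v' < dd ^+ 2 ->
  forall a, `|y a - y' a| < dd /\ `|v a - v' a| < dd.
Proof.
move=> d0 hs a.
have A1 : (y a - y' a) ^+ 2 <= \sum_(b < n) (y b - y' b) ^+ 2.
  by rewrite (bigD1 a) //= lerDl sumr_ge0 // => b _; rewrite sqr_ge0.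
have A2 : (v a - v' a) ^+ 2 <= \sum_(b < n) (v b - v' b) ^+ 2.
  by rewrite (bigD1 a) //= lerDl sumr_ge0 // => b _; rewrite sqr_ge0.
have B1 : 0 <= \sum_(b < n) (y b - y' b) ^+ 2 by rewrite sumr_ge0 // => b _; rewrite sqr_ge0.
have B2 : 0 <= \sum_(b < n) (v b - v' b) ^+ 2 by rewrite sumr_ge0 // => b _; rewrite sqr_ge0.
move: hs; rewrite /sqdist => hs.
split; rewrite ltr_norml; apply/andP; split; nra.
Qed.
Variables (G : 'I_n -> R -> R) (eta : R) (dg : ('I_n -> R) -> ('I_n -> R)).
Hypothesis HGder : forall a y1, 0 <= y1 -> derivable (G a) y1 1.

Notation Psik rho beta yk vk := (Psi Delta Lambda d t G eta dg rho beta yk vk).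

Lemma G_cont a y : 0 <= y -> {for y, continuous (G a)}.
Proof. by move=> y0; apply: differentiable_continuous; apply/derivable1_diffP; exact: HGder. Qed.

Lemma Psi_LSC rho beta yk vk (z0 : Z) : 0 <= rho -> nnZ z0 ->
  LSC (fun z : Z => Psik rho beta yk vk z.1 z.2) z0.
Proof.
move=> r0 nz.
apply: (LSC_ext (f := fun z : Z =>
   (\sum_(a < n) t a (z.1 a) (z.2 a) * z.2 a) + eta * (\sum_(a < n) G a (z.1 a))
   + rho * (\sum_(a < n) prim t a (z.1 a) (z.2 a)) + rho * (- gv yk)
   + rho * (\sum_(a < n) - (dg yk a * (z.1 a - yk a)))
   + rho * beta * (\sum_(a < n) (z.1 a - yk a) ^+ 2 + \sum_(a < n) (z.2 a - vk a) ^+ 2))).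
  by move=> x; rewrite /Psi /Fobj /Phi /sqdist /fobj sumrN; ring.
apply: LSC_add; last first.
  apply: CONT_LSC; apply: CONT_scale; apply: CONT_add; apply: CONT_sum => a.
    by apply: (CONT_fst (f := fun x => (x - yk a) ^+ 2)); exact: cont_sq.
  by apply: (CONT_snd (f := fun x => (x - vk a) ^+ 2)); exact: cont_sq.
apply: LSC_add; last first.
  apply: CONT_LSC; apply: CONT_scale; apply: CONT_sum => a.
  by apply: (CONT_fst (f := fun x => - (dg yk a * (x - yk a)))); exact: cont_lin.
apply: LSC_add; last by apply: CONT_LSC; exact: CONT_const.
apply: LSC_add; last first.
  apply: LSC_scale => //; apply: LSC_sum => a; have [h1 h2] := nz a.
  exact: prim_LSC.
apply: LSC_add.
  apply: CONT_LSC; apply: CONT_sum => a; have [h1 h2] := nz a.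
  apply: (CONT_coord (h := fun q : R * R => t a q.1 q.2 * q.2)).
  exact: (cont_tv (@t_cont a (z0.1 a) (z0.2 a) h1)).
apply: CONT_LSC; apply: CONT_scale; apply: CONT_sum => a; have [h1 h2] := nz a.
by apply: CONT_fst; exact: G_cont.
Qed.

Lemma Psi_USC rho beta yk vk : 0 <= rho -> nnZ (yk, vk) ->
  LSC (fun z : Z => - Psik rho beta yk vk yk z.2) (yk, vk).
Proof.
move=> r0 nz.
apply: (LSC_ext (f := fun z : Z =>
   - (\sum_(a < n) t a (yk a) (z.2 a) * z.2 a) + (- eta * (\sum_(a < n) G a (yk a)))
   + rho * (\sum_(a < n) - prim t a (yk a) (z.2 a)) + rho * gv yk
   + rho * (\sum_(a < n) dg yk a * (yk a - yk a))
   + (- (rho * beta)) * (\sum_(a < n) (yk a - yk a) ^+ 2 + \sum_(a < n) (z.2 a - vk a) ^+ 2))).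
  by move=> x; rewrite /Psi /Fobj /Phi /sqdist /fobj sumrN; ring.
apply: LSC_add; last first.
  apply: CONT_LSC; apply: CONT_scale; apply: CONT_add; first exact: CONT_const.
  apply: CONT_sum => a.
  by apply: (CONT_snd (f := fun x => (x - vk a) ^+ 2)); exact: cont_sq.
apply: LSC_add; last by apply: CONT_LSC; exact: CONT_const.
apply: LSC_add; last by apply: CONT_LSC; exact: CONT_const.
apply: LSC_add; last first.
  apply: LSC_scale => //; apply: LSC_sum => a; have [h1 h2] := nz a.
  exact: prim_USC.
apply: LSC_add; last by apply: CONT_LSC; exact: CONT_const.
have : CONT (fun z : Z => \sum_(a < n) t a (yk a) (z.2 a) * z.2 a) (yk, vk).
  apply: CONT_sum => a; have [h1 h2] := nz a.
  apply: (CONT_snd (f := fun x => t a (yk a) x * x)).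
  by apply: cvgM; [exact: (@t_slice a (yk a) h1 _) | exact: cvg_id].
by case.
Qed.
Variables (u : 'I_n -> R) (tau : nat).

Definition CLV (v : 'I_n -> R) := (forall a, 0 <= v a) /\
  forall e, 0 < e -> exists2 v', Vs v' & forall a, `|v' a - v a| < e.

Lemma Vs_CLV v : Vs v -> CLV v.
Proof.
move=> Vv; split; first exact: Vset_nn.
by move=> e e0; exists v => // a; rewrite subrr normr0.
Qed.

Lemma fin_min (P : 'I_n -> bool) (f : 'I_n -> R) : (forall i, P i -> 0 < f i) ->
  exists2 dd, 0 < dd & forall i, P i -> dd <= f i.
Proof.
move=> H.
suff : forall s : seq 'I_n, exists2 dd, 0 < dd & forall i, i \in s -> P i -> dd <= f i.
  by case/(_ (enum 'I_n)) => dd d0 Hdd; exists dd => // i; apply: Hdd; rewrite mem_enum.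
elim=> [|i s [dd d0 IH]]; first by exists 1.
case Pi: (P i).
  exists (Num.min dd (f i)); first by rewrite lt_min d0 H.
  move=> j; rewrite in_cons => /orP[/eqP -> _|js Pj]; first by rewrite ge_min lexx orbT.
  by rewrite ge_min IH.
exists dd => // j; rewrite in_cons => /orP[/eqP -> |js Pj]; first by rewrite Pi.
exact: IH.
Qed.

Lemma AMA_props rho beta yk vk out : 0 <= rho -> Ups u tau yk -> CLV vk ->
  AMA_out Delta Lambda d u tau t G eta dg rho beta yk vk yk out ->
  [/\ Ups u tau out.1, CLV out.2 & Psik rho beta yk vk out.1 out.2 <= Psik rho beta yk vk yk vk].
Proof.
move=> r0 Uyk [vk0 vkA] [ys [vs [ys0 [HV [HY Hout]]]]].
have yk0 : forall a, 0 <= yk a by move=> a; case: Uyk => /(_ a) /andP[].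
have step0 : Psik rho beta yk vk yk (vs 1%N) <= Psik rho beta yk vk yk vk.
  apply/ler_addgt0Pr => e e0.
  have nz : nnZ (yk, vk) by move=> a; split; [exact: yk0 | exact: vk0].
  have [dd d0 Hdd] := (Psi_USC (yk := yk) (vk := vk) beta r0 nz) e e0.
  have [v' Vv' Hv'] := vkA dd d0.
  have Hc : closeZ dd (yk, v') (yk, vk) by move=> a; split; rewrite /= ?subrr ?normr0 //; exact: Hv'.
  have nz' : nnZ (yk, v') by move=> a; split; [exact: yk0 | exact: Vset_nn].
  have := Hdd _ nz' Hc; rewrite /= => H1.
  have := (HV 0%N).2 v' Vv'; rewrite ys0 => H2.
  lra.
have desc : forall j, Psik rho beta yk vk (ys j.+1) (vs j.+1) <= Psik rho beta yk vk yk vk.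
  elim=> [|j IH].
    apply: le_trans step0; have := (HY 0%N).2 (ys 0%N); rewrite ys0; apply; exact: Uyk.
  apply: le_trans IH.
  apply: le_trans ((HY j.+1).2 (ys j.+1) (HY j).1) _.
  exact: ((HV j.+1).2 (vs j.+1) (HV j).1).
case: Hout => [[J [PO [_ ->]]]|[_ acc]].
  split; [exact: (HY J).1 | exact/Vs_CLV/(HV J).1 | exact: desc].
have clo : forall dd, 0 < dd -> exists j, closeZ dd (ys j.+1, vs j.+1) out.
  move=> dd d0; have [j [_ hj]] := acc (dd ^+ 2) (exprn_gt0 2 d0) 0%N.
  by exists j => a; exact: (sq_close d0 hj a).
have itY : forall j a, 0 <= ys j.+1 a <= u a by move=> j a; case: (HY j).1 => /(_ a).
have nzo : nnZ out.
  move=> a; split; rewrite leNgt; apply/negP => h.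
    have hp : 0 < - out.1 a by rewrite oppr_gt0.
    have [j /(_ a) [c1 _]] := clo _ hp.
    move: c1 (itY j a); rewrite /= ltr_norml => /andP[c1 c2] /andP[c3 _]; lra.
  have hp : 0 < - out.2 a by rewrite oppr_gt0.
    have [j /(_ a) [_ c1]] := clo _ hp.
  have := Vset_nn (HV j).1 a.
  move: c1; rewrite /= ltr_norml => /andP[c1 c2] c3; lra.
split.
- split.
    move=> a; apply/andP; split; first by case: (nzo a).
    rewrite leNgt; apply/negP => h.
    have hp : 0 < out.1 a - u a by rewrite subr_gt0.
    have [j /(_ a) [c1 _]] := clo _ hp.
    move: c1 (itY j a); rewrite /= ltr_norml => /andP[c1 c2] /andP[_ c3]; lra.
  have [dd d0 Hdd] := @fin_min (fun a => 0 < out.1 a) (fun a => out.1 a) (fun i h => h).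
  have [j cj] := clo dd d0.
  apply: leq_trans _ (proj2 (HY j).1).
  apply: subset_leq_card; apply/fintype.subsetP => a; rewrite !inE /= => h.
  have := Hdd a h; have [c1 _] := cj a; move: c1; rewrite /= ltr_norml => /andP[c1 c2] c3.
  lra.
- split; first by move=> a; case: (nzo a).
  move=> e e0; have [j cj] := clo e e0.
  by exists (vs j.+1); [exact: (HV j).1 | move=> a; case: (cj a)].
- apply/ler_addgt0Pr => e e0.
  have [dd d0 Hdd] := (Psi_LSC beta yk vk r0 nzo) e e0.
  have [j cj] := clo dd d0.
  have nzj : nnZ (ys j.+1, vs j.+1).
    by move=> a; split; [case/andP: (itY j a) | exact: Vset_nn (HV j).1 a].
  have := Hdd _ nzj cj; have := desc j; rewrite /= => *; lra.
Qed.

End Gsec.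
Lemma exec_prev (K : option nat) k : executed K k.+1 -> executed K k /\ K <> Some k.
Proof.
case: K => [K0|] //= h; split; first exact: ltnW.
by move=> [e]; move: h; rewrite e ltnn.
Qed.

Unset Implicit Arguments.
Theorem proposition4p3 (R : realType) (n m p : nat)
  (Delta : 'I_n -> 'I_m -> bool) (Lambda : 'I_p -> 'I_m -> bool)
  (d : 'I_p -> R) (u : 'I_n -> R) (tau : nat)
  (t : 'I_n -> R -> R -> R) (G : 'I_n -> R -> R) (eta : R)
  (dg : ('I_n -> R) -> ('I_n -> R))
  (eps1 eps2 eps3 theta_l theta_u rho0 sigma : R) (y0 : 'I_n -> R)
  (y v : nat -> ('I_n -> R)) (rho beta : nat -> R) (K : option nat) :
  (* network data *)
  (forall r : 'I_m, exists! w : 'I_p, Lambda w r) ->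
  (forall w : 'I_p, exists r : 'I_m, Lambda w r) ->
  (forall w, 0 < d w) ->
  (forall a, 0 <= u a) ->
  (1 <= tau <= n)%N ->
  0 < eta ->
  (* t_a continuously differentiable (jointly) for y_a >= 0 *)
  (forall a (q : R * R), 0 <= q.1 ->
     differentiable (fun z : R * R => t a z.1 z.2) q) ->
  (forall a (e : R * R),
     {within [set q : R * R | 0 <= q.1],
       continuous (fun q : R * R => 'd (fun z : R * R => t a z.1 z.2) q e)}) ->
  (* t_a strictly increasing in v_a for y_a >= 0 *)
  (forall a y1 w1 w2, 0 <= y1 -> w1 < w2 -> t a y1 w1 < t a y1 w2) ->
  (* G_a nonnegative, C^1, strictly increasing, convex (on y_a >= 0) *)
  (forall a y1, 0 <= y1 -> 0 <= G a y1) ->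
  (forall a y1, 0 <= y1 -> derivable (G a) y1 1) ->
  (forall a, {within [set y1 : R | 0 <= y1], continuous (derive1 (G a))}) ->
  (forall a y1 y2, 0 <= y1 -> y1 < y2 -> G a y1 < G a y2) ->
  (forall a y1 y2 lam, 0 <= y1 -> 0 <= y2 -> 0 <= lam <= 1 ->
     G a (lam * y1 + (1 - lam) * y2) <= lam * G a y1 + (1 - lam) * G a y2) ->
  (* int_0^{v_a} t_a(y_a,w)dw and t_a(y_a,v_a) v_a jointly convex *)
  (forall a y1 w1 y2 w2 lam, 0 <= y1 -> 0 <= w1 -> 0 <= y2 -> 0 <= w2 ->
     0 <= lam <= 1 ->
     prim t a (lam * y1 + (1 - lam) * y2) (lam * w1 + (1 - lam) * w2)
       <= lam * prim t a y1 w1 + (1 - lam) * prim t a y2 w2) ->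
  (forall a y1 w1 y2 w2 lam, 0 <= y1 -> 0 <= w1 -> 0 <= y2 -> 0 <= w2 ->
     0 <= lam <= 1 ->
     t a (lam * y1 + (1 - lam) * y2) (lam * w1 + (1 - lam) * w2)
       * (lam * w1 + (1 - lam) * w2)
       <= lam * (t a y1 w1 * w1) + (1 - lam) * (t a y2 w2 * w2)) ->
  (* dg is the gradient of g on Y *)
  (forall yb y1, Yset u yb -> Yset u y1 ->
     (fun s : R => (gval Delta Lambda d t (fun a => yb a + s * (y1 a - yb a))
                    - gval Delta Lambda d t yb) / s)
       @ 0^'+ --> \sum_(a < n) dg yb a * (y1 a - yb a)) ->
  (* PDC parameters *)
  0 < eps1 -> 0 < eps2 -> 0 < eps3 -> 0 < theta_l -> theta_l < theta_u ->
  0 < rho0 -> 1 < sigma -> Ups u tau y0 ->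
  (* the iterates of PDC *)
  PDC_run Delta Lambda d u tau t G eta dg eps1 eps2 eps3 theta_l theta_u
    rho0 sigma y0 y v rho beta K ->
  forall k, executed K k ->
    psi Delta Lambda d t G eta (y k.+1) (v k.+1) (rho k)
      <= psi Delta Lambda d t G eta (y k) (v k) (rho k)
         - rho k * beta k * sqdist (y k.+1) (v k.+1) (y k) (v k).
Proof.
move=> Huniq Hex Hd Hu Htau Heta Htdiff Htdc Htmono HG0 HGder HGc HGmono HGconv
  Hpconv Htvconv Hgrad He1 He2 He3 Htl Htlu Hrho0 Hsig Hy0 Hrun.
case: Hrun => y0e [Vv0 _] rho0e beta0b Hstep.
have Vne : exists v0, Vset Delta Lambda d v0 by exists (v 0%N).
have inv : forall k, executed K k ->
    [/\ 0 < rho k, 0 < beta k, Ups u tau (y k) & CLV Delta Lambda d (v k)].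
  elim=> [_|k IH /exec_prev [ek nK]].
    have r0 : 0 < rho 0%N by rewrite rho0e.
    split => //.
    - apply: lt_le_trans (proj1 (andP beta0b)); exact: divr_gt0.
    - by rewrite y0e.
    - exact: Vs_CLV.
  have [r0 b0 Uy Cv] := IH ek.
  have [HA _ Hr] := Hstep k ek.
  have [er eb] := Hr nK.
  have r1 : 0 < rho k.+1.
    rewrite er; case: ifP => _ //; apply: mulr_gt0 => //; lra.
  have [U1 C1 _] := AMA_props Htdiff Htmono HGder (ltW r0) Uy Cv HA.
  split => //.
  by apply: lt_le_trans (proj1 (andP eb)); exact: divr_gt0.
move=> k ek.
have [r0 b0 Uy Cv] := inv k ek.
have [HA _ _] := Hstep k ek.
have [U1 C1 HP] := AMA_props Htdiff Htmono HGder (ltW r0) Uy Cv HA.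
have Y1 := proj1 U1; have Y0 := proj1 Uy.
have nn1 : forall a, 0 <= y k.+1 a by move=> a; case/andP: (Y1 a).
have nn0 : forall a, 0 <= y k a by move=> a; case/andP: (Y0 a).
have gg := g_grad Huniq Htdiff Htmono Hpconv Vne nn1 nn0 (Hgrad _ _ Y0 Y1).
move: HP gg; rewrite /psi /Psi /Phi /phi /=.
have -> : sqdist (y k) (v k) (y k) (v k) = 0.
  by rewrite /sqdist !big1 ?addr0 // => a _; rewrite subrr expr0n.
have -> : \sum_(a < n) dg (y k) a * (y k a - y k a) = 0.
  by rewrite big1 // => a _; rewrite subrr mulr0.
set S := sqdist _ _ _ _.
set L := \sum_(a < n) _.
move=> H1 H2.
have : rho k * (gval Delta Lambda d t (y k) + L) <= rho k * gval Delta Lambda d t (y k.+1).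
  by apply: ler_wpM2l; [exact: ltW | lra].
move: H1; rewrite mulr0 subr0 addr0.
set A := Fobj _ _ _ _ _. set B := Fobj _ _ _ _ _.
set f1 := fobj _ _ _. set f0 := fobj _ _ _.
move=> H1 H3.
have e1 : rho k * (f1 - gval Delta Lambda d t (y k) - L) = rho k * f1 - rho k * (gval Delta Lambda d t (y k) + L) by ring.
have e2 : rho k * (f1 - gval Delta Lambda d t (y k.+1)) = rho k * f1 - rho k * gval Delta Lambda d t (y k.+1) by ring.
rewrite e2; move: H1; rewrite e1 => H1.
lra.
Qed.
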